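(* Let $\mathcal{G}=(\mathcal{V},\mathcal{E})$ be a connected undirected graph with $n$ vertices and $m$ edges, with incidence matrix $B\in\mathbb{R}^{n\times m}$ (for an arbitrary orientation of the edges), and let $\Gamma=\mathrm{diag}(\gamma_1,\dots,\gamma_m)$ with $\gamma_k>0$. Let $\mathcal{V}=\mathcal{V}_1\cup\mathcal{V}_2$ be a partition into disjoint nonempty sets and write $B=\begin{bmatrix}B_1\\ B_2\end{bmatrix}$ accordingly, $B_1\in\mathbb{R}^{|\mathcal{V}_1|\times m}$, $B_2\in\mathbb{R}^{|\mathcal{V}_2|\times m}$. Define $$L_S=B_1\Gamma B_1^T-B_1\Gamma B_2^T(B_2\Gamma B_2^T)^{-1}B_2\Gamma B_1^T,$$ $B_2^+=\Gamma B_2^T(B_2\Gamma B_2^T)^{-1}$ and the projected incidence matrix $B_S=B_1(I-B_2^+B_2)\in\mathbb{R}^{|\mathcal{V}_1|\times m}$. Then: (i) $\operatorname{im}\mathbb{1}=\ker B_S^T$, where $\mathbb{1}$ is the all-ones vector in $\mathbb{R}^{|\mathcal{V}_1|}$; (ii) $B_S\Gamma B_2^T=0$; (iii) $L_S=B_S\Gamma B_1^T$; (iv) $L_S=B_S\Gamma B_S^T$.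
   Context: The incidence matrix $B$ has entries $b_{ik}=+1$ if vertex $i$ is the tail of edge $k$, $-1$ if $i$ is the head of edge $k$, and $0$ otherwise. $L_S$ is the Schur complement of the weighted Laplacian $L=B\Gamma B^T$ with respect to the block indexed by $\mathcal{V}_2$; $B_2\Gamma B_2^T$ is invertible since $\mathcal{G}$ is connected. *)

(* Defs.v *)
From mathcomp Require Import all_boot all_order all_algebra.
Set Implicit Arguments. Unset Strict Implicit. Unset Printing Implicit Defensive.
Import Order.TTheory GRing.Theory Num.Theory.
Local Open Scope ring_scope.

(* An (oriented) graph with vertex set 'I_n and edge set 'I_m: edge k goes
   from vertex [tl k] (tail) to vertex [hd k] (head). *)

Definition incidence (R : pzRingType) (n m : nat) (tl hd : 'I_m -> 'I_n) : 'M[R]_(n, m) :=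
  \matrix_(i < n, k < m)
     ((if tl k == i then 1 else 0) - (if hd k == i then 1 else 0)).

Definition adjacent (n m : nat) (tl hd : 'I_m -> 'I_n) : rel 'I_n :=
  fun i j => [exists k : 'I_m, ((tl k == i) && (hd k == j)) || ((tl k == j) && (hd k == i))].

Definition connected_graph (n m : nat) (tl hd : 'I_m -> 'I_n) : Prop :=
  forall i j : 'I_n, connect (adjacent tl hd) i j.

(* Main.v *)
Require Import Defs.
From mathcomp Require Import all_boot all_order all_algebra.
From mathcomp Require Import ring.
Import Order.TTheory GRing.Theory Num.Theory.
Local Open Scope ring_scope.

Lemma incT_mul (R : pzRingType) n m (tl hd : 'I_m -> 'I_n) (y : 'cV[R]_n) k :
  ((incidence R tl hd)^T *m y) k 0 = y (tl k) 0 - y (hd k) 0.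
Proof.
rewrite mxE.
under eq_bigr => i _ do rewrite !mxE mulrBl.
rewrite sumrB; congr (_ - _).
- rewrite (bigD1 (tl k)) //= eqxx mul1r big1 ?addr0 // => i /negbTE.
  by rewrite eq_sym => ->; rewrite mul0r.
- rewrite (bigD1 (hd k)) //= eqxx mul1r big1 ?addr0 // => i /negbTE.
  by rewrite eq_sym => ->; rewrite mul0r.
Qed.

Lemma ker_const (R : pzRingType) n m (tl hd : 'I_m -> 'I_n) (y : 'cV[R]_n) :
  connected_graph tl hd -> (incidence R tl hd)^T *m y = 0 ->
  forall i j, y i 0 = y j 0.
Proof.
move=> Hc Hy i j; have /connectP [p pth ->] := Hc i j.
elim: p i pth => [|a p IH] i //= /andP [adj pth].
rewrite -(IH a pth).
have E k : y (tl k) 0 = y (hd k) 0.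
  by apply/eqP; rewrite -subr_eq0 -incT_mul Hy mxE.
case/existsP: adj => k /orP [] /andP [/eqP <- /eqP <-] //.
Qed.

Theorem proposition1 (R : realFieldType) (n1 n2 m : nat)
  (tl hd : 'I_m -> 'I_(n1 + n2)) (gamma : 'rV[R]_m) :
  (forall k, tl k != hd k) ->
  connected_graph tl hd ->
  (0 < n1)%N -> (0 < n2)%N ->
  (forall k, 0 < gamma 0 k) ->
  let B : 'M[R]_(n1 + n2, m) := incidence R tl hd in
  let B1 := usubmx B in
  let B2 := dsubmx B in
  let G := diag_mx gamma in
  let LS := B1 *m G *m B1^T - B1 *m G *m B2^T *m invmx (B2 *m G *m B2^T) *m B2 *m G *m B1^T in
  let B2p := G *m B2^T *m invmx (B2 *m G *m B2^T) in
  let BS := B1 *m (1%:M - B2p *m B2) in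
  [/\ (forall x : 'cV[R]_n1, BS^T *m x = 0 <-> exists c : R, x = c *: const_mx 1),
      BS *m G *m B2^T = 0,
      LS = BS *m G *m B1^T &
      LS = BS *m G *m BS^T].
Proof.
move=> _ Hc n1p n2p gp B B1 B2 G LS B2p BS.
have BT (x1 : 'cV[R]_n1) (x2 : 'cV[R]_n2) : B^T *m col_mx x1 x2 = B1^T *m x1 + B2^T *m x2.
  by rewrite -[B]vsubmxK tr_col_mx mul_row_col.
have Hk (x1 : 'cV[R]_n1) (x2 : 'cV[R]_n2) : B1^T *m x1 + B2^T *m x2 = 0 ->
    forall i j, col_mx x1 x2 i 0 = col_mx x1 x2 j 0.
  move=> H; have := @ker_const R _ _ tl hd (col_mx x1 x2) Hc. rewrite -/B BT; exact.
pose i0 : 'I_n1 := Ordinal n1p.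
have GT : G^T = G by rewrite /G tr_diag_mx.
set M := B2 *m G *m B2^T.
have Mu : M \in unitmx.
  rewrite unitmxE unitfE; apply/negP => /det0P [v vn0 vM].
  pose u := v *m B2.
  have H0 : u *m G *m u^T = 0.
    rewrite /u trmx_mul !mulmxA; have -> : v *m B2 *m G *m B2^T = v *m M by rewrite /M !mulmxA.
    by rewrite vM mul0mx.
  have Hs : \sum_k (u 0 k ^+ 2 * gamma 0 k) = 0.
    move/matrixP: H0 => /(_ 0 0); rewrite !mxE => E; rewrite -[RHS]E.
    by apply: eq_bigr => k _; rewrite mul_mx_diag !mxE; ring.
  have u0 : u = 0.
    apply/matrixP => i k; rewrite (ord1 i) [RHS]mxE.
    have /eqP := psumr_eq0P (fun j _ => mulr_ge0 (sqr_ge0 (u 0 j)) (ltW (gp j))) Hs (i:=k) isT.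
    by rewrite mulf_eq0 sqrf_eq0 (gt_eqF (gp k)) orbF => /eqP.
  have Hv : B1^T *m 0 + B2^T *m v^T = 0.
    by rewrite mulmx0 add0r -trmx_mul -/u u0 trmx0.
  apply/negP: vn0; apply/negPn/eqP/matrixP => i j; rewrite (ord1 i) !mxE.
  have := Hk _ _ Hv (rshift n1 j) (lshift n2 i0).
  by rewrite col_mxEd col_mxEu !mxE.
have E : B2p *m M = G *m B2^T by rewrite /B2p -mulmxA mulVmx // mulmx1.
have E' : B2p *m B2 *m (G *m B2^T) = G *m B2^T by rewrite !mulmxA -E /M !mulmxA.
have B2B2p : B2 *m B2p = 1%:M by rewrite /B2p !mulmxA -/M mulmxV.
have Hii : BS *m G *m B2^T = 0.
  have key : (1%:M - B2p *m B2) *m (G *m B2^T) = 0 by rewrite mulmxBl mul1mx E' subrr.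
  by rewrite /BS -2!mulmxA key mulmx0.
have Hiii : LS = BS *m G *m B1^T.
  by rewrite /LS /BS /B2p mulmxBr mulmx1 !mulmxBl !mulmxA.
have BST : BS^T = B1^T - B2^T *m (B2p^T *m B1^T).
  by rewrite /BS trmx_mul raddfB /= trmx1 trmx_mul mulmxBl mul1mx mulmxA.
split => //; last first.
  by rewrite Hiii BST mulmxBr (mulmxA _ B2^T) Hii mul0mx subr0.
move=> x; split.
  rewrite BST mulmxBl -!mulmxA => H.
  set w := B2p^T *m (B1^T *m x) in H.
  have Hx : B1^T *m x + B2^T *m (- w) = 0 by rewrite mulmxN.
  exists (x i0 0); apply/matrixP => i j; rewrite (ord1 j) !mxE mulr1.
  have := Hk _ _ Hx (lshift n2 i) (lshift n2 i0).
  by rewrite !col_mxEu.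
case=> c ->; rewrite -scalemxAr.
have hB0 : B1^T *m const_mx 1 + B2^T *m const_mx 1 = 0 :> 'cV[R]_m.
  rewrite -BT col_mx_const; apply/matrixP => k j; rewrite (ord1 j) incT_mul !mxE.
  by rewrite subrr.
rewrite BST mulmxBl -!mulmxA.
have -> : B1^T *m const_mx 1 = - (B2^T *m const_mx 1) :> 'cV[R]_m.
  by apply/eqP; rewrite -addr_eq0 hB0.
rewrite mulmxN (mulmxA B2p^T) -trmx_mul B2B2p trmx1 mul1mx.
by rewrite mulmxN opprK addNr scaler0.
Qed.
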